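(* Fix $\gamma>1$, $\zeta_0>1$, $S_0>0$, $J>0$, $E_0<0$ with $(u_0,E_0)\in\mathcal T_{\rm acc}$, and let $(\bar u_1,\bar E)$ and $l_{\max}$ be as in the context. Define on $[0,l_{\max})$ $$\bar a_{11}:=1-\frac{\bar u_1^{\gamma+1}}{u_s^{\gamma+1}},\qquad \bar a:=\frac{\bar u_1^{\gamma-1}\big(\bar E-(\gamma+1)\bar u_1'\bar u_1\big)}{\gamma S_0J^{\gamma-1}},$$ regarded as functions of $\mathbf x=(x_1,x_2)$ depending only on $x_1$. Then for each $L\in(0,l_{\max})$ there exists a constant $\lambda_L>0$ such that, with $\Omega_L=(0,L)\times(-1,1)$: (a) $-\partial_1\bar a_{11}\ge\lambda_L$ in $\overline{\Omega_L}$; (b) $-\bar a\ge\lambda_L$ in $\overline{\Omega_L}$; (c) $-2\bar a-(2m-1)\partial_1\bar a_{11}\ge\lambda_L$ in $\overline{\Omega_L}$ for $m=0,1,2,3$; (d) setting $\mathfrak a_1(L):=\min_{\overline{\Omega_L}}(-\partial_1\bar a_{11})$, $\mathfrak a_2(L):=\min_{\overline{\Omega_L}}(-\bar a)$, $\mathfrak c_m(L):=\min_{\overline{\Omega_L}}(-2\bar a-(2m-1)\partial_1\bar a_{11})$ for $m=0,1,2,3$, one has $\lim_{L\to l_{\max}-}\mathfrak a_1(L)=\lim_{L\to l_{\max}-}\mathfrak a_2(L)=\lim_{L\to l_{\max}-}\mathfrak c_m(L)=0$ for $m=0,1,2,3$.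
   Context: Given $\gamma>1$, $J>0$, $S_0>0$, $\zeta_0>1$: $u_s:=(\gamma S_0J^{\gamma-1})^{1/(\gamma+1)}$, $\bar u_i:=\zeta_0u_s$, $\bar\rho_i:=J/\bar u_i$, $H(u):=\int_{u_s}^{u}\frac{J}{\bar u_i t^{\gamma+1}}(t^{\gamma+1}-u_s^{\gamma+1})(\bar u_i-t)\,dt$, $\mathcal T_{\rm acc}:=\{(u,E):u>0,\ \tfrac12E^2=H(u),\ (u-u_s)E\ge0\}$ (for $E_0<0$, $0<u_0<u_s$). $(\bar u_1,\bar E)$ is the solution of $\bar u_1'=\bar E\bar u_1^\gamma/(\bar u_1^{\gamma+1}-u_s^{\gamma+1})$, $\bar E'=J/\bar u_1-\bar\rho_i$, $(\bar u_1,\bar E)(0)=(u_0,E_0)$; it is smooth with $\bar u_1'>0$ on its maximal interval $[0,l_{\max})$, $l_{\max}<\infty$, and $\lim_{x_1\to l_{\max}-}\bar u_1'(x_1)=0$. ($\bar a_{11}$ and $\bar a$ are the coefficients of the linearization of the potential flow equation at the background state, normalized by the coefficient of $\partial_{22}$.) *)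

(* Defs.v *)
From Stdlib Require Import Reals.
From Coquelicot Require Import Coquelicot.
Open Scope R_scope.

Definition u_s (gam S0 J : R) : R :=
  Rpower (gam * S0 * Rpower J (gam - 1)) (1 / (gam + 1)).
Definition ubar_i (gam S0 J zeta0 : R) : R := zeta0 * u_s gam S0 J.
Definition rhobar_i (gam S0 J zeta0 : R) : R := J / ubar_i gam S0 J zeta0.

Definition Hfun (gam S0 J zeta0 u : R) : R :=
  RInt (fun t => J / (ubar_i gam S0 J zeta0 * Rpower t (gam + 1))
                 * (Rpower t (gam + 1) - Rpower (u_s gam S0 J) (gam + 1))
                 * (ubar_i gam S0 J zeta0 - t))
       (u_s gam S0 J) u.

Definition T_acc (gam S0 J zeta0 u E : R) : Prop :=
  0 < u /\ E ^ 2 / 2 = Hfun gam S0 J zeta0 u /\ 0 <= (u - u_s gam S0 J) * E.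

Definition Ivl (l : R) : R -> Prop := fun x => 0 <= x < l.

Definition deriv_within (D : R -> Prop) (f : R -> R) (x l : R) : Prop :=
  filterlim (fun y => (f y - f x) / (y - x))
            (within (fun y => D y /\ y <> x) (locally x)) (locally l).

Definition cont_within (D : R -> Prop) (f : R -> R) (x : R) : Prop :=
  filterlim f (within D (locally x)) (locally (f x)).

(* (u, E) is a C^1 solution on [0,l) of
     u' = E u^gam / (u^(gam+1) - u_s^(gam+1)),  E' = J/u - rhobar_i,
   (u,E)(0) = (u0,E0), with derivative du = u' > 0 on [0,l).
   The first equation is imposed wherever its denominator is nonzero;
   at a sonic point u' is determined by continuity of du. *)
Definition is_sol (gam S0 J zeta0 u0 E0 l : R) (u E du : R -> R) : Prop :=
  0 < l /\ u 0 = u0 /\ E 0 = E0 /\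
  forall x, Ivl l x ->
    deriv_within (Ivl l) u x (du x) /\
    deriv_within (Ivl l) E x (J / u x - rhobar_i gam S0 J zeta0) /\
    cont_within (Ivl l) du x /\
    0 < du x /\
    (Rpower (u x) (gam + 1) <> Rpower (u_s gam S0 J) (gam + 1) ->
       du x = E x * Rpower (u x) gam
              / (Rpower (u x) (gam + 1) - Rpower (u_s gam S0 J) (gam + 1))).

Definition a11bar (gam S0 J : R) (u : R -> R) (x1 : R) : R :=
  1 - Rpower (u x1) (gam + 1) / Rpower (u_s gam S0 J) (gam + 1).

Definition abar (gam S0 J : R) (u E du : R -> R) (x1 : R) : R :=
  Rpower (u x1) (gam - 1) * (E x1 - (gam + 1) * du x1 * u x1)
  / (gam * S0 * Rpower J (gam - 1)).

Definition clOmega (L : R) (x : R * R) : Prop :=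
  0 <= fst x <= L /\ -1 <= snd x <= 1.

Definition is_min_on (A : R * R -> Prop) (f : R * R -> R) (m : R) : Prop :=
  (exists x, A x /\ f x = m) /\ (forall x, A x -> m <= f x).

(* Main.v *)
Require Import Defs.
From Stdlib Require Import Reals Lra Lia ClassicalEpsilon.
From Coquelicot Require Import Coquelicot.
Open Scope R_scope.

Lemma ballR (x e y : R) : ball x e y <-> Rabs (y - x) < e.
Proof. reflexivity. Qed.

Lemma cw_ed D f x : cont_within D f x ->
  forall eps, 0 < eps -> exists d, 0 < d /\ forall y, D y -> Rabs (y - x) < d -> Rabs (f y - f x) < eps.
Proof.
  intros H eps He. apply filterlim_locally with (eps := mkposreal eps He) in H.
  destruct H as [d Hd]. exists d. split. apply cond_pos.
  intros y Dy Hy. apply (Hd y). apply Hy. exact Dy.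
Qed.

Lemma ed_cw (D : R -> Prop) f x :
  (forall eps, 0 < eps -> exists d, 0 < d /\ forall y, D y -> Rabs (y - x) < d -> Rabs (f y - f x) < eps) ->
  cont_within D f x.
Proof.
  intros H. apply filterlim_locally. intros [eps He].
  destruct (H eps He) as [d [Hd H1]]. exists (mkposreal d Hd).
  intros y Hy Dy. apply (H1 y Dy Hy).
Qed.

Lemma dw_ed D f x l : deriv_within D f x l ->
  forall eps, 0 < eps -> exists d, 0 < d /\ forall y, D y -> y <> x -> Rabs (y - x) < d ->
     Rabs ((f y - f x) / (y - x) - l) < eps.
Proof.
  intros H eps He. apply filterlim_locally with (eps := mkposreal eps He) in H.
  destruct H as [d Hd]. exists d. split. apply cond_pos.
  intros y Dy Hyx Hy. apply (Hd y). apply Hy. split; assumption.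
Qed.

Lemma al_ed f l : filterlim f (at_left l) (locally 0) ->
  forall eps, 0 < eps -> exists d, 0 < d /\ forall y, l - d < y < l -> Rabs (f y) < eps.
Proof.
  intros H eps He. apply filterlim_locally with (eps := mkposreal eps He) in H.
  destruct H as [d Hd]. exists d. split. apply cond_pos.
  intros y Hy. specialize (Hd y). simpl in Hd. rewrite ballR in Hd.
  replace (f y) with (f y - 0) by ring. apply Hd. 2: lra.
  rewrite Rabs_left1; simpl; lra.
Qed.

Lemma ed_al f l : 
  (forall eps, 0 < eps -> exists d, 0 < d /\ forall y, l - d < y < l -> Rabs (f y) < eps) ->
  filterlim f (at_left l) (locally 0).
Proof.
  intros H. apply filterlim_locally. intros [eps He].
  destruct (H eps He) as [d [Hd H1]]. exists (mkposreal d Hd).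
  intros y Hy Hyl. rewrite ballR in Hy |- *. simpl in *.
  replace (f y - 0) with (f y) by ring. apply H1.
  rewrite Rabs_left in Hy; lra.
Qed.

Lemma cont_of_deriv D f x d : deriv_within D f x d -> cont_within D f x.
Proof.
  intros H. apply ed_cw. intros eps He.
  destruct (dw_ed _ _ _ _ H 1 Rlt_0_1) as [dl [Hdl H1]].
  assert (Ha : 0 < Rabs d + 1) by (pose proof (Rabs_pos d); lra).
  exists (Rmin dl (eps / (Rabs d + 1))). split.
  { apply Rmin_pos; [lra| apply Rdiv_lt_0_compat; lra]. }
  intros y Dy Hy.
  destruct (Req_dec y x) as [->|Hne]. { unfold Rminus; rewrite Rplus_opp_r, Rabs_R0; lra. }
  assert (Hq := H1 y Dy Hne (Rlt_le_trans _ _ _ Hy (Rmin_l _ _))).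
  assert (Hy2 := Rlt_le_trans _ _ _ Hy (Rmin_r _ _)).
  replace (f y - f x) with ((f y - f x) / (y - x) * (y - x)) by (field; lra).
  rewrite Rabs_mult.
  assert (Rabs ((f y - f x) / (y - x)) < Rabs d + 1).
  { pose proof (Rabs_triang_inv ((f y - f x) / (y - x)) d). lra. }
  apply Rle_lt_trans with ((Rabs d + 1) * Rabs (y - x)).
  apply Rmult_le_compat_r. apply Rabs_pos. lra.
  apply Rlt_le_trans with ((Rabs d + 1) * (eps / (Rabs d + 1))).
  apply Rmult_lt_compat_l; lra. right; field; lra.
Qed.

Lemma interior_derive l f x d : 0 < x < l -> deriv_within (Ivl l) f x d -> derivable_pt_lim f x d.
Proof.
  intros Hx H eps He. destruct (dw_ed _ _ _ _ H eps He) as [dl [Hdl H1]].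
  assert (Hp : 0 < Rmin dl (Rmin x (l - x))) by (repeat apply Rmin_pos; lra).
  exists (mkposreal _ Hp). intros h Hh Hha. simpl in Hha.
  pose proof (Rmin_l dl (Rmin x (l - x))). pose proof (Rmin_r dl (Rmin x (l - x))).
  pose proof (Rmin_l x (l - x)). pose proof (Rmin_r x (l - x)).
  replace h with (x + h - x) at 2 by ring.
  apply H1.
  - unfold Ivl. apply Rabs_def2 in Hha. lra.
  - intro. apply Hh. lra.
  - replace (x + h - x) with h by ring. lra.
Qed.

Lemma deriv_unique l f x d1 d2 : Ivl l x -> deriv_within (Ivl l) f x d1 -> deriv_within (Ivl l) f x d2 -> d1 = d2.
Proof.
  intros Hx H1 H2. destruct (Req_dec d1 d2) as [|Hne]; auto. exfalso.
  assert (He : 0 < Rabs (d1 - d2) / 2) by (assert (d1 - d2 <> 0) by lra; apply Rabs_pos_lt in H; lra) .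
  destruct (dw_ed _ _ _ _ H1 _ He) as [a [Ha A]].
  destruct (dw_ed _ _ _ _ H2 _ He) as [b [Hb B]].
  unfold Ivl in Hx.
  set (e := Rmin a (Rmin b (l - x)) / 2).
  assert (0 < Rmin a (Rmin b (l - x))) by (repeat apply Rmin_pos; lra).
  pose proof (Rmin_l a (Rmin b (l - x))). pose proof (Rmin_r a (Rmin b (l - x))).
  pose proof (Rmin_l b (l - x)). pose proof (Rmin_r b (l - x)).
  assert (Hy : Ivl l (x + e)) by (unfold Ivl, e; lra).
  assert (Hn : x + e <> x) by (unfold e; lra).
  assert (Hr : Rabs (x + e - x) < a /\ Rabs (x + e - x) < b).
  { replace (x + e - x) with e by ring. rewrite Rabs_right; unfold e; lra. }
  specialize (A _ Hy Hn (proj1 Hr)). specialize (B _ Hy Hn (proj2 Hr)).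
  set (q := (f (x + e) - f x) / (x + e - x)) in *.
  pose proof (Rabs_triang (q - d2) (d1 - q)) as T.
  replace (q - d2 + (d1 - q)) with (d1 - d2) in T by ring.
  rewrite Rabs_minus_sym in A. lra.
Qed.

Lemma eq_cont l f g x : Ivl l x -> cont_within (Ivl l) f x -> cont_within (Ivl l) g x ->
  (exists d, 0 < d /\ forall y, Ivl l y -> y <> x -> Rabs (y - x) < d -> f y = g y) -> f x = g x.
Proof.
  intros Hx H1 H2 [c [Hc Hfg]]. unfold Ivl in Hx.
  destruct (Req_dec (f x) (g x)) as [|Hne]; auto. exfalso.
  assert (He : 0 < Rabs (f x - g x) / 2) by (assert (0 < Rabs (f x - g x)) by (apply Rabs_pos_lt; lra); lra) .
  destruct (cw_ed _ _ _ H1 _ He) as [a [Ha A]].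
  destruct (cw_ed _ _ _ H2 _ He) as [b [Hb B]].
  set (e := Rmin c (Rmin a (Rmin b (l - x))) / 2).
  assert (0 < Rmin c (Rmin a (Rmin b (l - x)))) by (repeat apply Rmin_pos; lra).
  pose proof (Rmin_l c (Rmin a (Rmin b (l - x)))). pose proof (Rmin_r c (Rmin a (Rmin b (l - x)))).
  pose proof (Rmin_l a (Rmin b (l - x))). pose proof (Rmin_r a (Rmin b (l - x))).
  pose proof (Rmin_l b (l - x)). pose proof (Rmin_r b (l - x)).
  assert (Hy : Ivl l (x + e)) by (unfold Ivl, e; lra).
  assert (Hn : x + e <> x) by (unfold e; lra).
  assert (Hr : Rabs (x + e - x) = e).
  { replace (x + e - x) with e by ring. rewrite Rabs_right; unfold e; lra. }
  specialize (A _ Hy). specialize (B _ Hy). rewrite Hr in A, B.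
  rewrite (Hfg _ Hy Hn) in A by (rewrite Hr; unfold e; lra).
  assert (A' : Rabs (g (x + e) - f x) < Rabs (f x - g x) / 2) by (apply A; unfold e; lra).
  assert (B' : Rabs (g (x + e) - g x) < Rabs (f x - g x) / 2) by (apply B; unfold e; lra).
  pose proof (Rabs_triang (f x - g (x + e)) (g (x + e) - g x)) as T.
  replace (f x - g (x + e) + (g (x + e) - g x)) with (f x - g x) in T by ring.
  rewrite Rabs_minus_sym in A'. lra.
Qed.

Lemma mvt l f df a b : 0 < a < b -> b < l ->
  (forall x, Ivl l x -> deriv_within (Ivl l) f x (df x)) ->
  exists c, a <= c <= b /\ f b - f a = df c * (b - a).
Proof.
  intros Hab Hb Hd.
  destruct (MVT_gen f a b df) as [c [Hc Heq]].
  - intros x Hx. rewrite Rmin_left in Hx by lra. rewrite Rmax_right in Hx by lra.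
    apply is_derive_Reals. apply (interior_derive l). lra. apply Hd. unfold Ivl; lra.
  - intros x Hx. rewrite Rmin_left in Hx by lra. rewrite Rmax_right in Hx by lra.
    apply derivable_continuous_pt. exists (df x). apply (interior_derive l). lra. apply Hd. unfold Ivl; lra.
  - exists c. rewrite Rmin_left in Hc by lra. rewrite Rmax_right in Hc by lra. auto.
Qed.

Lemma incr l f df a b : 0 <= a < b -> b < l ->
  (forall x, Ivl l x -> deriv_within (Ivl l) f x (df x)) ->
  (forall x, Ivl l x -> 0 < df x) -> f a < f b.
Proof.
  intros Hab Hb Hd Hp.
  assert (Hmain : forall a, 0 < a < b -> f a < f b).
  { intros a' Ha'. destruct (mvt l f df a' b) as [c [Hc Heq]]; auto; try lra.
    assert (0 < df c) by (apply Hp; unfold Ivl; lra).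
    assert (0 < df c * (b - a')) by (apply Rmult_lt_0_compat; lra). lra. }
  destruct (Req_dec a 0) as [Ha0|Ha0]; [| apply Hmain; lra].
  subst a.
  assert (Hd0 : 0 < df 0) by (apply Hp; unfold Ivl; lra).
  destruct (dw_ed _ _ _ _ (Hd 0 ltac:(unfold Ivl; lra)) _ Hd0) as [d [Hdp Hq]].
  set (e := Rmin d b / 2).
  pose proof (Rmin_l d b). pose proof (Rmin_r d b). pose proof (Rmin_pos d b Hdp ltac:(lra)).
  assert (He : Rabs (e - 0) < d) by (rewrite Rminus_0_r, Rabs_right; unfold e; lra).
  specialize (Hq e ltac:(unfold Ivl, e; lra) ltac:(unfold e; lra) He).
  apply Rabs_def2 in Hq. destruct Hq as [_ Hq].
  assert (0 < (f e - f 0) / (e - 0)) by lra.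
  assert (0 < e) by (unfold e; lra).
  assert (0 < f e - f 0).
  { replace (f e - f 0) with ((f e - f 0) / (e - 0) * e) by (field; lra).
    apply Rmult_lt_0_compat; lra. }
  assert (f e < f b) by (apply Hmain; unfold e; lra). lra.
Qed.

Lemma within_le (D D' : R -> Prop) x : (forall y, D' y -> D y) ->
  filter_le (within D' (locally x)) (within D (locally x)).
Proof.
  intros HD P HP. unfold within in *. apply filter_imp with (2 := HP). intros y H1 H2. apply H1, HD, H2.
Qed.

Lemma cont_comp D u G x : cont_within D u x -> continuity_pt G (u x) ->
  cont_within D (fun y => G (u y)) x.
Proof.
  intros Hu HG. apply continuity_pt_filterlim in HG. unfold cont_within in *.
  eapply filterlim_comp; eauto.
Qed.

Lemma cont_mult D f g x : cont_within D f x -> cont_within D g x ->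
  cont_within D (fun y => f y * g y) x.
Proof.
  intros Hf Hg. unfold cont_within in *.
  apply (filterlim_comp_2 f g Rmult Hf Hg). apply (filterlim_mult (K := R_AbsRing)).
Qed.

Lemma chain D u G x d g' : deriv_within D u x d -> derivable_pt_lim G (u x) g' ->
  deriv_within D (fun y => G (u y)) x (g' * d).
Proof.
  intros Hu HG.
  set (Q := fun v => if Req_EM_T v (u x) then g' else (G v - G (u x)) / (v - u x)).
  assert (HQ : filterlim Q (locally (u x)) (locally g')).
  { apply filterlim_locally. intros [eps He].
    destruct (HG eps He) as [del Hdel]. exists del. intros v Hv.
    rewrite ballR in Hv |- *. simpl in *. unfold Q.
    destruct (Req_EM_T v (u x)) as [_|Hne].
    - unfold Rminus; rewrite Rplus_opp_r, Rabs_R0; lra.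
    - specialize (Hdel (v - u x) ltac:(lra) Hv).
      replace (u x + (v - u x)) with v in Hdel by ring. exact Hdel. }
  assert (Hc : filterlim u (within (fun y => D y /\ y <> x) (locally x)) (locally (u x))).
  { eapply filterlim_filter_le_1. 2: apply (cont_of_deriv _ _ _ _ Hu).
    apply within_le. tauto. }
  assert (HQu := filterlim_comp _ _ _ u Q _ _ _ Hc HQ).
  unfold deriv_within in *.
  eapply filterlim_ext_loc.
  2: { apply (filterlim_comp_2 _ _ Rmult HQu Hu). apply (filterlim_mult (K := R_AbsRing)). }
  simpl. exists (mkposreal 1 Rlt_0_1). intros y _ [Dy Hy]. unfold Q.
  destruct (Req_EM_T (u y) (u x)) as [E|Hne].
  - rewrite E. unfold Rminus. rewrite !Rplus_opp_r. unfold Rdiv; ring.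
  - field. split; lra.
Qed.

Lemma ext_cont l f L c : 0 <= c <= L -> L < l -> cont_within (Ivl l) f c ->
  continuity_pt (fun x => f (Rmax 0 x)) c.
Proof.
  intros Hc HL Hf. apply continuity_pt_filterlim. apply filterlim_locally.
  intros [eps He]. destruct (cw_ed _ _ _ Hf eps He) as [d [Hd H1]].
  assert (Hp : 0 < Rmin d (l - L)) by (apply Rmin_pos; lra).
  exists (mkposreal _ Hp). intros x Hx. rewrite ballR in Hx |- *. simpl in *.
  pose proof (Rmin_l d (l - L)). pose proof (Rmin_r d (l - L)).
  rewrite (Rmax_right 0 c) by lra.
  apply Rabs_def2 in Hx.
  assert (Hm : Rabs (Rmax 0 x - c) < d).
  { unfold Rmax. destruct (Rle_dec 0 x); apply Rabs_def1; lra. }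
  apply H1; auto. unfold Ivl, Rmax. destruct (Rle_dec 0 x); lra.
Qed.

Lemma gen l (u du G : R -> R) u0 B M (T : R * R -> R) :
  0 < l ->
  (forall x, Ivl l x -> cont_within (Ivl l) u x /\ cont_within (Ivl l) du x /\
                         u0 <= u x <= B /\ 0 < du x) ->
  (forall v, u0 <= v <= B -> continuity_pt G v /\ 0 < G v /\ G v <= M) ->
  filterlim du (at_left l) (locally 0) ->
  (forall x, 0 <= fst x < l -> T x = du (fst x) * G (u (fst x))) ->
  exists A : R -> R, (forall L, 0 < L < l -> is_min_on (clOmega L) T (A L) /\ 0 < A L) /\
     filterlim A (at_left l) (locally 0).
Proof.
  intros Hl Hx HG Hlim HT.
  set (f := fun x1 => du x1 * G (u x1)).
  assert (Hf : forall x, Ivl l x -> cont_within (Ivl l) f x /\ 0 < f x /\ f x <= du x * M).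
  { intros x Dx. destruct (Hx x Dx) as [Hu [Hdu [Hb Hp]]]. destruct (HG _ Hb) as [H1 [H2 H3]].
    split; [|split].
    - apply cont_mult; auto. apply cont_comp; auto.
    - unfold f. apply Rmult_lt_0_compat; auto.
    - unfold f. apply Rmult_le_compat_l; lra. }
  assert (Hmin : forall L, exists m, 0 < L < l -> is_min_on (clOmega L) T m /\ 0 < m /\ m <= f L).
  { intros L. destruct (Rlt_dec 0 L) as [H0|H0]; [destruct (Rlt_dec L l) as [H1|H1]|].
    2,3: exists 0; intros; lra.
    destruct (continuity_ab_min (fun x => f (Rmax 0 x)) 0 L ltac:(lra)) as [mx [Hmx Hmx2]].
    { intros c Hc. apply (ext_cont l f L); try lra. apply Hf. unfold Ivl; lra. }
    rewrite (Rmax_right 0 mx) in Hmx by lra.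
    exists (f mx). intros _. split; [split|split].
    - exists (mx, 0). split. unfold clOmega; simpl; lra. rewrite HT; simpl; auto. lra.
    - intros [x1 x2] [Hx1 Hx2]. simpl in Hx1. rewrite HT by (simpl; lra). simpl.
      specialize (Hmx x1 Hx1). rewrite (Rmax_right 0 x1) in Hmx by lra. exact Hmx.
    - apply Hf. unfold Ivl; lra.
    - specialize (Hmx L ltac:(lra)). rewrite (Rmax_right 0 L) in Hmx by lra. exact Hmx. }
  destruct (choice _ Hmin) as [A HA].
  exists A. split. { intros L HL. destruct (HA L HL) as [H1 [H2 _]]. auto. }
  assert (HM : 0 < M).
  { destruct (Hx 0 ltac:(unfold Ivl; lra)) as [_ [_ [Hb _]]]. destruct (HG _ Hb) as [_ [H2 H3]]. lra. }
  apply ed_al. intros eps He.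
  destruct (al_ed _ _ Hlim (eps / M) ltac:(apply Rdiv_lt_0_compat; lra)) as [d [Hd H1]].
  exists (Rmin d l). split. apply Rmin_pos; lra.
  intros y Hy. pose proof (Rmin_l d l). pose proof (Rmin_r d l).
  destruct (HA y ltac:(lra)) as [_ [H2 H3]].
  destruct (Hf y ltac:(unfold Ivl; lra)) as [_ [_ H4]].
  destruct (Hx y ltac:(unfold Ivl; lra)) as [_ [_ [_ Hdy]]]. specialize (H1 y ltac:(lra)). rewrite Rabs_right in H1 |- * by lra.
  apply Rle_lt_trans with (du y * M). lra.
  apply Rlt_le_trans with (eps / M * M). apply Rmult_lt_compat_r; lra.
  right; field; lra.
Qed.

Lemma Rpower_pos x y : 0 < Rpower x y.
Proof. unfold Rpower. apply exp_pos. Qed.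

Lemma rp_inj a b c : 0 < a -> 0 < b -> 0 < c -> Rpower a c = Rpower b c -> a = b.
Proof.
  intros Ha Hb Hc H. destruct (Rtotal_order a b) as [H1|[H1|H1]]; auto.
  - pose proof (Rlt_Rpower_l a b c Hc (conj Ha H1)). lra.
  - pose proof (Rlt_Rpower_l b a c Hc (conj Hb H1)). lra.
Qed.

Lemma rp_cont v y : 0 < v -> continuity_pt (fun x => Rpower x y) v.
Proof.
  intros Hv. apply derivable_continuous_pt. exists (y * Rpower v (y - 1)).
  apply derivable_pt_lim_power; auto.
Qed.

Lemma Gab gam Us al be u0 B : 0 < gam -> 0 < Us -> 0 < al -> 0 <= be -> 0 < u0 ->
  forall v, u0 <= v <= B ->
  continuity_pt (fun v => (al * Rpower v gam + be * Us / v) / Us) v /\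
  0 < (al * Rpower v gam + be * Us / v) / Us /\
  (al * Rpower v gam + be * Us / v) / Us <= (al * Rpower B gam + be * Us / u0) / Us.
Proof.
  intros Hg HU Ha Hb Hu0 v Hv. split; [|split].
  - unfold Rdiv. apply continuity_pt_mult; [|apply continuity_pt_const; intros a b; auto].
    apply continuity_pt_plus.
    + apply continuity_pt_mult. apply continuity_pt_const; intros a b; auto. apply rp_cont; lra.
    + apply continuity_pt_mult. apply continuity_pt_const; intros a b; auto.
      apply continuity_pt_inv. apply continuity_pt_id. lra.
  - apply Rdiv_lt_0_compat; auto.
    assert (0 < al * Rpower v gam) by (apply Rmult_lt_0_compat; auto; apply Rpower_pos).
    assert (0 <= be * Us / v) by (apply Rmult_le_pos; [apply Rmult_le_pos; lra| left; apply Rinv_0_lt_compat; lra]).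
    lra.
  - unfold Rdiv. apply Rmult_le_compat_r. left; apply Rinv_0_lt_compat; lra.
    apply Rplus_le_compat.
    + apply Rmult_le_compat_l. lra. apply Rle_Rpower_l; lra.
    + apply Rmult_le_compat_l. apply Rmult_le_pos; lra.
      apply Rinv_le_contravar; lra.
Qed.

Lemma deriv_G gam Us v : 0 < v -> Us <> 0 ->
  derivable_pt_lim (fun v => 1 - Rpower v (gam + 1) / Us) v (- ((gam + 1) * Rpower v gam) / Us).
Proof.
  intros Hv HU.
  assert (H := derivable_pt_lim_minus _ _ v _ _ (derivable_pt_lim_const 1 v)
     (derivable_pt_lim_scal _ (/ Us) v _ (derivable_pt_lim_power v (gam + 1) Hv))).
  apply is_derive_Reals. apply is_derive_Reals in H.
  replace (- ((gam + 1) * Rpower v gam) / Us) with (0 - / Us * ((gam + 1) * Rpower v (gam + 1 - 1))).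
  2: { replace (gam + 1 - 1) with gam by ring. field; auto. }
  eapply is_derive_ext. 2: exact H. intros t. unfold minus_fct, mult_real_fct, fct_cte. simpl. field. auto.
Qed.

Theorem lemma4p1
  (gam zeta0 S0 J u0 E0 lmax : R) (u1 E du d1a11 : R -> R)
  (Hgam : 1 < gam) (Hzeta : 1 < zeta0) (HS0 : 0 < S0) (HJ : 0 < J)
  (HE0 : E0 < 0) (Hu0 : 0 < u0 < u_s gam S0 J)
  (Hacc : T_acc gam S0 J zeta0 u0 E0)
  (Hsol : is_sol gam S0 J zeta0 u0 E0 lmax u1 E du)
  (Hmax : forall (l : R) (u' E' du' : R -> R),
      is_sol gam S0 J zeta0 u0 E0 l u' E' du' ->
      (forall x, Ivl (Rmin l lmax) x -> u' x = u1 x /\ E' x = E x) ->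
      l <= lmax)
  (Hlim : filterlim du (at_left lmax) (locally 0))
  (Hd1a11 : forall x1, Ivl lmax x1 ->
      deriv_within (Ivl lmax) (a11bar gam S0 J u1) x1 (d1a11 x1)) :
  let a11_1 := fun x : R * R => - d1a11 (fst x) in
  let a_2 := fun x : R * R => - abar gam S0 J u1 E du (fst x) in
  let c_ := fun (m : nat) (x : R * R) =>
      - 2 * abar gam S0 J u1 E du (fst x) - (2 * INR m - 1) * d1a11 (fst x) in
  (forall L, 0 < L < lmax ->
     exists lam, 0 < lam /\
       (forall x, clOmega L x -> lam <= a11_1 x) /\
       (forall x, clOmega L x -> lam <= a_2 x) /\
       (forall (m : nat), (m <= 3)%nat -> forall x, clOmega L x -> lam <= c_ m x))
  /\
  (exists A1 : R -> R,
     (forall L, 0 < L < lmax -> is_min_on (clOmega L) a11_1 (A1 L)) /\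
     filterlim A1 (at_left lmax) (locally 0))
  /\
  (exists A2 : R -> R,
     (forall L, 0 < L < lmax -> is_min_on (clOmega L) a_2 (A2 L)) /\
     filterlim A2 (at_left lmax) (locally 0))
  /\
  (forall (m : nat), (m <= 3)%nat ->
     exists Cm : R -> R,
       (forall L, 0 < L < lmax -> is_min_on (clOmega L) (c_ m) (Cm L)) /\
       filterlim Cm (at_left lmax) (locally 0)).
Proof.
  intros a11_1 a_2 c_.
  destruct Hsol as [Hl [Hu00 [HE00 Hpt]]].
  set (Us := Rpower (u_s gam S0 J) (gam + 1)).
  assert (HUsK : Us = gam * S0 * Rpower J (gam - 1)).
  { unfold Us, u_s. rewrite Rpower_mult. replace (1 / (gam + 1) * (gam + 1)) with 1 by (field; lra).
    apply Rpower_1. apply Rmult_lt_0_compat. apply Rmult_lt_0_compat; lra. apply Rpower_pos. }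
  assert (HUs : 0 < Us) by apply Rpower_pos. fold Us in Hpt.
  assert (Hdu : forall x, Ivl lmax x -> deriv_within (Ivl lmax) u1 x (du x)) by (intros x Hx; apply (Hpt x Hx)).
  assert (Hdup : forall x, Ivl lmax x -> 0 < du x) by (intros x Hx; apply (Hpt x Hx)).
  assert (Hincr : forall a b, 0 <= a < b -> b < lmax -> u1 a < u1 b).
  { intros a b Hab Hb. apply (incr lmax u1 du); auto. }
  assert (Hlow : forall x, Ivl lmax x -> u0 <= u1 x).
  { intros x [Hx1 Hx2]. destruct (Req_dec x 0) as [->|Hne]. lra.
    left. rewrite <- Hu00. apply Hincr; lra. }
  assert (Hupos : forall x, Ivl lmax x -> 0 < u1 x).
  { intros x Hx. specialize (Hlow x Hx). lra. }
  assert (HP : forall v, 0 < v -> Rpower v (gam + 1) = Rpower v gam * v).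
  { intros v Hv. rewrite Rpower_plus, Rpower_1; auto. }
  assert (HPm : forall v, 0 < v -> Rpower v (gam - 1) = Rpower v gam / v).
  { intros v Hv. replace (Rpower v gam) with (Rpower v (gam - 1 + 1)) by (f_equal; ring).
    rewrite Rpower_plus, Rpower_1; auto. field. lra. }
  assert (Hns : forall y, Ivl lmax y -> Rpower (u1 y) (gam + 1) <> Us ->
            E y = du y * (u1 y - Us / Rpower (u1 y) gam)).
  { intros y Hy Hne. destruct (Hpt y Hy) as [_ [_ [_ [_ Hf]]]].
    rewrite (Hf Hne). rewrite (HP (u1 y) (Hupos y Hy)) in Hne |- *.
    pose proof (Rpower_pos (u1 y) gam). pose proof (Hupos y Hy).
    field. split. lra. intro. apply Hne. lra. }
  assert (HE : forall x, Ivl lmax x -> E x = du x * (u1 x - Us / Rpower (u1 x) gam)).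
  { intros x Hx. destruct (Req_dec (Rpower (u1 x) (gam + 1)) Us) as [Hs|Hs]; [|auto].
    apply (eq_cont lmax E (fun y => du y * (u1 y - Us / Rpower (u1 y) gam)) x); auto.
    - apply (cont_of_deriv _ _ _ _ (proj1 (proj2 (Hpt x Hx)))).
    - apply cont_mult. apply (Hpt x Hx).
      apply (cont_comp _ u1 (fun v => v - Us / Rpower v gam)).
      apply (cont_of_deriv _ _ _ _ (Hdu x Hx)).
      apply continuity_pt_minus. apply continuity_pt_id.
      unfold Rdiv. apply continuity_pt_mult. apply continuity_pt_const; intros a b; auto.
      apply continuity_pt_inv. apply rp_cont. auto. apply Rgt_not_eq, Rpower_pos.
    - exists 1. split. lra. intros y Hy Hne _. apply Hns; auto. intro Heq.
      rewrite <- Hs in Heq. apply rp_inj in Heq; auto; try lra.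
      destruct Hx, Hy. destruct (Rlt_dec y x).
      + specialize (Hincr y x ltac:(lra) ltac:(lra)). lra.
      + specialize (Hincr x y ltac:(lra) ltac:(lra)). lra. }
  assert (Hd : forall x, Ivl lmax x -> d1a11 x = - ((gam + 1) * Rpower (u1 x) gam) / Us * du x).
  { intros x Hx. apply (deriv_unique lmax (a11bar gam S0 J u1) x); auto.
    apply (chain _ u1 (fun v => 1 - Rpower v (gam + 1) / Us)). auto.
    apply deriv_G; auto. lra. }
  assert (HB : exists B, forall x, Ivl lmax x -> u1 x <= B).
  { destruct (al_ed _ _ Hlim 1 Rlt_0_1) as [d [Hd0 Hd1]].
    set (a := Rmax (lmax - d / 2) (lmax / 2)).
    assert (Ha : 0 < a < lmax).
    { unfold a, Rmax. destruct (Rle_dec (lmax - d / 2) (lmax / 2)); lra. }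
    assert (Ha2 : lmax - d < a) by (unfold a; pose proof (Rmax_l (lmax - d / 2) (lmax / 2)); lra).
    exists (u1 a + lmax). intros x [Hx1 Hx2].
    destruct (Rlt_dec a x) as [Hax|Hax].
    - destruct (mvt lmax u1 du a x) as [c [Hc Heq]]; auto; try lra.
      specialize (Hd1 c ltac:(lra)). apply Rabs_def2 in Hd1.
      assert (du c * (x - a) <= 1 * (x - a)) by (apply Rmult_le_compat_r; lra). lra.
    - destruct (Req_dec x a) as [->|Hne]. lra.
      specialize (Hincr x a ltac:(lra) ltac:(lra)). lra. }
  destruct HB as [B HB].
  assert (HxA : forall x, Ivl lmax x -> cont_within (Ivl lmax) u1 x /\ cont_within (Ivl lmax) du x /\
                         u0 <= u1 x <= B /\ 0 < du x).
  { intros x Hx0. split; [|split; [|split]].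
    - apply (cont_of_deriv _ _ _ _ (Hdu x Hx0)).
    - apply (Hpt x Hx0).
    - split; auto.
    - auto. }
  assert (Hgen : forall al be (T : R * R -> R), 0 < al -> 0 <= be ->
     (forall x, 0 <= fst x < lmax -> T x = du (fst x) * ((al * Rpower (u1 (fst x)) gam + be * Us / u1 (fst x)) / Us)) ->
     exists A : R -> R, (forall L, 0 < L < lmax -> is_min_on (clOmega L) T (A L) /\ 0 < A L) /\
     filterlim A (at_left lmax) (locally 0)).
  { intros al be T Hal Hbe HT.
    apply (gen lmax u1 du (fun v => (al * Rpower v gam + be * Us / v) / Us) u0 B
              ((al * Rpower B gam + be * Us / u0) / Us)); auto.
    intros v Hv. apply Gab; auto; lra. }
  assert (H1 : exists A : R -> R, (forall L, 0 < L < lmax -> is_min_on (clOmega L) a11_1 (A L) /\ 0 < A L) /\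
     filterlim A (at_left lmax) (locally 0)).
  { apply (Hgen (gam + 1) 0). lra. lra. intros x Hx. unfold a11_1. rewrite Hd by auto.
    pose proof (Hupos (fst x) Hx). field. lra. }
  assert (H2 : exists A : R -> R, (forall L, 0 < L < lmax -> is_min_on (clOmega L) a_2 (A L) /\ 0 < A L) /\
     filterlim A (at_left lmax) (locally 0)).
  { apply (Hgen gam 1). lra. lra. intros x Hx. unfold a_2, abar. rewrite <- HUsK.
    rewrite HE by auto. rewrite HPm by (apply Hupos; auto).
    pose proof (Hupos (fst x) Hx). pose proof (Rpower_pos (u1 (fst x)) gam). field. lra. }
  assert (H3 : forall m : nat, exists A : R -> R, (forall L, 0 < L < lmax -> is_min_on (clOmega L) (c_ m) (A L) /\ 0 < A L) /\
     filterlim A (at_left lmax) (locally 0)).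
  { intros m. pose proof (pos_INR m).
    apply (Hgen (2 * gam + (2 * INR m - 1) * (gam + 1)) 2). nra. lra.
    intros x Hx. unfold c_, abar. rewrite <- HUsK.
    rewrite HE by auto. rewrite HPm by (apply Hupos; auto). rewrite Hd by auto.
    pose proof (Hupos (fst x) Hx). pose proof (Rpower_pos (u1 (fst x)) gam). field. lra. }
  split; [|split; [|split]].
  - intros L HL.
    destruct H1 as [A1 [HA1 _]]. destruct H2 as [A2 [HA2 _]].
    destruct (H3 0%nat) as [C0 [HC0 _]]. destruct (H3 1%nat) as [C1 [HC1 _]].
    destruct (H3 2%nat) as [C2 [HC2 _]]. destruct (H3 3%nat) as [C3 [HC3 _]].
    destruct (HA1 L HL) as [[_ M1] P1]. destruct (HA2 L HL) as [[_ M2] P2].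
    destruct (HC0 L HL) as [[_ N0] Q0]. destruct (HC1 L HL) as [[_ N1] Q1].
    destruct (HC2 L HL) as [[_ N2] Q2]. destruct (HC3 L HL) as [[_ N3] Q3].
    set (lam := Rmin (Rmin (A1 L) (A2 L)) (Rmin (Rmin (C0 L) (C1 L)) (Rmin (C2 L) (C3 L)))).
    assert (Hl1 : lam <= A1 L /\ lam <= A2 L /\ lam <= C0 L /\ lam <= C1 L /\ lam <= C2 L /\ lam <= C3 L).
    { unfold lam.
      pose proof (Rmin_l (Rmin (A1 L) (A2 L)) (Rmin (Rmin (C0 L) (C1 L)) (Rmin (C2 L) (C3 L)))).
      pose proof (Rmin_r (Rmin (A1 L) (A2 L)) (Rmin (Rmin (C0 L) (C1 L)) (Rmin (C2 L) (C3 L)))).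
      pose proof (Rmin_l (A1 L) (A2 L)). pose proof (Rmin_r (A1 L) (A2 L)).
      pose proof (Rmin_l (Rmin (C0 L) (C1 L)) (Rmin (C2 L) (C3 L))). pose proof (Rmin_r (Rmin (C0 L) (C1 L)) (Rmin (C2 L) (C3 L))).
      pose proof (Rmin_l (C0 L) (C1 L)). pose proof (Rmin_r (C0 L) (C1 L)).
      pose proof (Rmin_l (C2 L) (C3 L)). pose proof (Rmin_r (C2 L) (C3 L)). lra. }
    exists lam. split; [|split; [|split]].
    + unfold lam. repeat apply Rmin_pos; auto.
    + intros x Hx. specialize (M1 x Hx). lra.
    + intros x Hx. specialize (M2 x Hx). lra.
    + intros m Hm x Hx. destruct m as [|[|[|[|m]]]].
      * specialize (N0 x Hx). lra.
      * specialize (N1 x Hx). lra.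
      * specialize (N2 x Hx). lra.
      * specialize (N3 x Hx). lra.
      * exfalso. lia.
  - destruct H1 as [A [HA HL]]. exists A. split; auto. intros L H. apply HA; auto.
  - destruct H2 as [A [HA HL]]. exists A. split; auto. intros L H. apply HA; auto.
  - intros m _. destruct (H3 m) as [A [HA HL]]. exists A. split; auto. intros L H. apply HA; auto.
Qed.
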